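(* Let $K$ be the irreducible cyclic code of length $n$ over $GF(q)$ with monic irreducible parity-check polynomial $h(x)$ of degree $m$ and order $n\ne q^m-1$. Then the Hamming weight of every codeword of $K$ is a multiple of $d=\gcd(q-1,n)$.
   Context: Let $q>2$ be a prime power. $A_n=GF(q)[x]/(x^n-1)$; Hamming weight of an element = number of nonzero coefficients of its representative of degree $<n$. The order of $h$ is the least $e\ge1$ with $h\mid x^e-1$. $K$ is the ideal of $A_n$ generated by $(x^n-1)/h(x)$. *)

(* Defs.v *)
From HB Require Import structures.
From mathcomp Require Import all_boot all_order all_algebra.
Set Implicit Arguments. Unset Strict Implicit. Unset Printing Implicit Defensive.
Import GRing.Theory.
Local Open Scope ring_scope.

Definition poly_order (F : fieldType) (h : {poly F}) (e : nat) : Prop :=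
  (0 < e)%N /\ h %| 'X^e - 1 /\
  (forall e' : nat, (0 < e')%N -> (e' < e)%N -> ~~ (h %| 'X^e' - 1)).

(* Elements of A_n = F[x]/(x^n-1) are represented by their unique
   representatives of degree < n. [in_K n h c]: c is such a representative
   lying in the ideal K generated by (x^n-1)/h. *)
Definition in_K (F : fieldType) (n : nat) (h c : {poly F}) : Prop :=
  (size c <= n)%N /\
  exists a : {poly F}, c = (a * (('X^n - 1) %/ h)) %% ('X^n - 1).

Definition hamming_weight (F : fieldType) (n : nat) (c : {poly F}) : nat :=
  (\sum_(i < n) nat_of_bool (c`_i != 0)%R)%N.

(* Main.v *)
Require Import Defs.
From HB Require Import structures.
From mathcomp Require Import all_boot all_order all_algebra all_field.
Import GRing.Theory.
Local Open Scope ring_scope.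
Set Implicit Arguments.
Section S.
Variable F : fieldType.

Lemma irred_coprime (h f : {poly F}) : irreducible_poly h -> ~~ (h %| f) -> coprimep h f.
Proof.
move=> hirr hf.
case: (irredp_XsubCP hirr (dvdp_gcdl h f)) => [g1|gh].
  by rewrite coprimep_def size_poly_eq1.
by move: hf; rewrite -(eqp_dvdl _ gh) dvdp_gcdr.
Qed.

Lemma irred_dvd_prod (h r : {poly F}) (s : seq F) : irreducible_poly h ->
  h %| \prod_(a <- s) (r - a%:P) -> exists a, h %| r - a%:P.
Proof.
move=> hirr; elim: s => [|a s IH].
  rewrite big_nil dvdp1 => /eqP e; case: hirr; rewrite e //.
rewrite big_cons; case hd: (h %| r - a%:P); first by move=> _; exists a.
rewrite Gauss_dvdpr ?IH //; apply: irred_coprime => //; by rewrite hd.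
Qed.

Lemma compXn (r : {poly F}) k : ('X^k) \Po r = r ^+ k.
Proof.
elim: k => [|k IH]; first by rewrite !expr0 -polyC1 comp_polyC.
by rewrite !exprS comp_polyM comp_polyX IH.
Qed.

End S.

Lemma finprod (F : finFieldType) (r : {poly F}) :
  r ^+ #|F| - r = \prod_(a <- index_enum F) (r - a%:P).
Proof.
have := congr1 (fun p => p \Po r) (@finField_genPoly F).
rewrite /= comp_polyB compXn comp_polyX => ->.
rewrite (big_morph (fun p => p \Po r) (fun p q => comp_polyM p q r) (comp_polyC 1 r)).
by apply: eq_bigr => a _; rewrite comp_polyB comp_polyX comp_polyC.
Qed.
Lemma shift_coef (F : fieldType) (c t : {poly F}) (n u : nat) (l : F) :
  (0 < u)%N -> (size c <= n)%N -> ('X^u - l%:P) * c = ('X^n - 1) * t ->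
  forall j, (j + u < n)%N -> c`_j = l * c`_(j + u).
Proof.
move=> u0 cn E j jn.
have n0 : (0 < n)%N by case: n jn {cn E} => //.
have st : (size t <= u)%N.
  have [->|tn0] := eqVneq t 0; first by rewrite size_poly0.
  have X1 : ('X^n - 1 : {poly F}) != 0.
    by rewrite -size_poly_eq0 -polyC1 size_XnsubC.
  have := size_polyMleq ('X^u - l%:P) c.
  rewrite E size_mul // -polyC1 !size_XnsubC // !addSn /=.
  move=> H; have := leq_trans H (leq_add (leqnn u) cn).
  by rewrite addnC leq_add2r.
have := congr1 (fun p : {poly F} => p`_(j + u)) E => /=.
rewrite mulrBl mulrBl mul1r coefB coefB coefXnM coefXnM coefCM.
rewrite ltnNge leq_addl /= addnK jn.
rewrite (nth_default _ (leq_trans st (leq_addl _ _))) subr0.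
by move/eqP; rewrite subr_eq0 => /eqP.
Qed.
Local Open Scope nat_scope.
Lemma count_periodic (f : nat -> nat) u d :
  (forall j, j + u < u * d -> f j = f (j + u)) ->
  \sum_(i < u * d) f i = d * \sum_(i < u) f i.
Proof.
move=> P.
have Q : forall k j, k < d -> j < u -> f (j + u * k) = f j.
  elim=> [|k IH] j kd ju; first by rewrite muln0 addn0.
  have E : j + u * k.+1 = (j + u * k) + u by rewrite mulnS addnCA addnC.
  rewrite E -P ?IH ?(ltnW kd) //.
  rewrite -E (leq_trans (n := u * k.+2)) //.
    by rewrite (mulnS u k.+1) ltn_add2r.
  by rewrite leq_mul2l kd orbT.
have R : forall k, k <= d -> \sum_(0 <= i < u * k) f i = k * \sum_(0 <= i < u) f i.
  elim=> [|k IH] kd; first by rewrite muln0 big_geq.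
  rewrite mulnS addnC (big_cat_nat (n := u * k)) ?leq_addr //=.
  rewrite IH ?(ltnW kd) // mulSn addnC; congr (_ + _).
  rewrite -{1}(add0n (u * k)) big_addn addKn.
  by apply: eq_big_nat => j /andP [_ ju]; rewrite Q.
by rewrite -!(big_mkord xpredT) R.
Qed.
Local Open Scope ring_scope.
Theorem corollary6 (F : finFieldType) (n m : nat) (h : {poly F}) :
  (2 < #|F|)%N ->
  h \is monic -> irreducible_poly h -> size h = m.+1 ->
  poly_order h n -> n <> (#|F| ^ m - 1)%N ->
  forall c : {poly F}, in_K n h c ->
  (gcdn (#|F| - 1) n %| hamming_weight n c)%N.
Proof.
move=> q2 hmon hirr hsz [n0 [hdiv _]] _ c [cn [a' Ec]].
have d0 : (0 < gcdn (#|F| - 1) n)%N by rewrite gcdn_gt0 n0 orbT.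
move: (dvdn_gcdl (#|F| - 1) n) (dvdn_gcdr (#|F| - 1) n) d0.
move: (gcdn (#|F| - 1) n) => d dq dn d0.
have nud : n = (n %/ d * d)%N by rewrite divnK.
move: (n %/ d)%N nud => u nud.
have u0 : (0 < u)%N by move: n0; rewrite nud muln_gt0 => /andP [].
have h0 : h != 0 by apply: irredp_neq0.
have hs1 : (1 < size h)%N by case: hirr.
set r := 'X^u %% h.
have H1 : h %| 'X^u - r.
  by rewrite {1}(divp_eq 'X^u h) addrK dvdp_mull.
have H2 : h %| r ^+ d - 1.
  have : h %| 'X^n - r ^+ d.
    apply: dvdp_trans H1 _.
    by rewrite nud exprM subrXX dvdp_mulIl.
  move=> H; have := dvdp_sub hdiv H.
  by rewrite opprB addrC addrA subrK.
have H3 : h %| r ^+ (#|F| - 1) - 1.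
  apply: dvdp_trans H2 _.
  by rewrite -(divnK dq) mulnC exprM -{2}(expr1n _ ((#|F| - 1) %/ d)%N) subrXX dvdp_mulIl.
have H4 : h %| r ^+ #|F| - r.
  have -> : r ^+ #|F| - r = r * (r ^+ (#|F| - 1) - 1).
    by rewrite mulrBr mulr1 -exprS subn1 prednK // (leq_trans _ q2).
  by rewrite dvdp_mull.
move: H4; rewrite finprod => H4; have [a Ha] := @irred_dvd_prod _ h r _ hirr H4.
have ra : r = a%:P.
  apply/eqP; rewrite -subr_eq0; apply/negPn/negP => nz.
  have := dvdp_leq nz Ha; rewrite leqNgt; move/negP; apply.
  apply: leq_ltn_trans (size_polyD _ _) _.
  rewrite gtn_max ltn_modp h0 /= size_polyN size_polyC.
  by case: (a != 0) => //; apply: ltnW.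
have H5 : h %| 'X^u - a%:P by rewrite -ra.
have a0 : a != 0.
  apply/negP => /eqP az; move: H5; rewrite az subr0 => H6.
  have : h %| 'X^u * 'X^(n - u) - 1.
    by rewrite -exprD subnKC // nud leq_pmulr.
  rewrite dvdp_subr ?dvdp_mulr // dvdp1 => /eqP hs.
  by move: hs1; rewrite hs.
set N := 'X^n - 1 : {poly F}.
set g := N %/ h.
have ce : c = a' * g - (a' * g %/ N) * N.
  by apply/eqP; rewrite eq_sym subr_eq [c + _]addrC Ec -divp_eq.
have ND : N %| ('X^u - a%:P) * c.
  rewrite ce mulrBr; apply: dvdp_sub; last by rewrite mulrA dvdp_mull.
  have -> : N = h * g. by rewrite [h * g]mulrC /g /N (divpK hdiv).
  by apply: dvdp_mul => //; apply: dvdp_mull.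
have E : ('X^u - a%:P) * c = N * ((('X^u - a%:P) * c) %/ N).
  by rewrite [N * _]mulrC divpK.
have per := @shift_coef _ c _ n u a u0 cn E.
have W : hamming_weight n c = (d * \sum_(i < u) nat_of_bool (c`_i != 0)%R)%N.
  rewrite /hamming_weight nud (@count_periodic (fun i => nat_of_bool (c`_i != 0)%R)) // => j; rewrite -nud => jn.
  by rewrite (per j jn) mulf_eq0 (negbTE a0).
by rewrite W dvdn_mulr.
Qed.
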